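(* Let $X,Y$ be nonempty compact Hausdorff spaces, $E\neq\{0_E\}$ a complex locally convex space, and $T:C(X,E)\to C(Y,E)$ a map with $\operatorname{Ran}(TF-TG)\subset\operatorname{Ran}(F-G)$ for all $F,G\in C(X,E)$ and $T(1\otimes 0_E)=1\otimes 0_E$. Then for all $f,g\in C(X)$ and $u,v\in E$, $$T(f\otimes u+g\otimes v)=T(f\otimes u)+T(g\otimes v).$$
   Context: $C(X,E)$ is the vector space of continuous functions $X\to E$; $\operatorname{Ran}(F)=\{F(x):x\in X\}$; for $f\in C(X)$ and $u\in E$, $f\otimes u$ denotes $x\mapsto f(x)u$, and $1\otimes 0_E$ is the constant function with value $0_E$. *)

(* Defs.v *)
From Stdlib Require Import Reals Lra List.
Open Scope R_scope.

Record C : Type := mkC { Re : R; Im : R }.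
Definition C0 : C := mkC 0 0.
Definition C1 : C := mkC 1 0.
Definition Cadd (a b : C) : C := mkC (Re a + Re b) (Im a + Im b).
Definition Copp (a : C) : C := mkC (- Re a) (- Im a).
Definition Csub (a b : C) : C := Cadd a (Copp b).
Definition Cmul (a b : C) : C :=
  mkC (Re a * Re b - Im a * Im b) (Re a * Im b + Im a * Re b).
Definition Cnorm (a : C) : R := sqrt (Re a * Re a + Im a * Im a).

Lemma Cnorm_nonneg a : 0 <= Cnorm a.
Proof. apply sqrt_pos. Qed.

Record TopSpace : Type := {
  tcar :> Type;
  topen : (tcar -> Prop) -> Prop;
  topen_full : topen (fun _ => True);
  topen_inter : forall U V, topen U -> topen V -> topen (fun x => U x /\ V x);
  topen_union : forall F : (tcar -> Prop) -> Prop,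
      (forall U, F U -> topen U) -> topen (fun x => exists U, F U /\ U x)
}.

Definition top_compact (X : TopSpace) : Prop :=
  forall F : (X -> Prop) -> Prop,
    (forall U, F U -> topen X U) ->
    (forall x, exists U, F U /\ U x) ->
    exists l : list (X -> Prop),
      Forall F l /\ forall x, exists U, In U l /\ U x.

Definition top_hausdorff (X : TopSpace) : Prop :=
  forall x y : X, x <> y ->
    exists U V, topen X U /\ topen X V /\ U x /\ V y /\
                forall z, ~ (U z /\ V z).

Record CVS : Type := {
  vcar :> Type;
  vzero : vcar;
  vadd : vcar -> vcar -> vcar;
  vopp : vcar -> vcar;
  vscal : C -> vcar -> vcar;
  vaddA : forall x y z, vadd x (vadd y z) = vadd (vadd x y) z;
  vaddC : forall x y, vadd x y = vadd y x;
  vadd0 : forall x, vadd vzero x = x;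
  vaddN : forall x, vadd x (vopp x) = vzero;
  vscal_addl : forall a b x, vscal (Cadd a b) x = vadd (vscal a x) (vscal b x);
  vscal_addr : forall a x y, vscal a (vadd x y) = vadd (vscal a x) (vscal a y);
  vscal_mul : forall a b x, vscal (Cmul a b) x = vscal a (vscal b x);
  vscal_1 : forall x, vscal C1 x = x
}.

Definition vsub (E : CVS) (x y : E) : E := vadd E x (vopp E y).

(** * Complex locally convex (Hausdorff) spaces: topology given by a
    separating family of seminorms. *)
Record LCS : Type := {
  lcs_vs :> CVS;
  lcs_idx : Type;
  sn : lcs_idx -> lcs_vs -> R;
  sn_nonneg : forall i x, 0 <= sn i x;
  sn_triangle : forall i x y, sn i (vadd lcs_vs x y) <= sn i x + sn i y;
  sn_hom : forall i a x, sn i (vscal lcs_vs a x) = Cnorm a * sn i x;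
  sn_sep : forall x, (forall i, sn i x = 0) -> x = vzero lcs_vs
}.

Definition contC (X : TopSpace) (f : X -> C) : Prop :=
  forall x eps, 0 < eps ->
    exists U, topen X U /\ U x /\ forall y, U y -> Cnorm (Csub (f y) (f x)) < eps.

Definition contE (X : TopSpace) (E : LCS) (F : X -> E) : Prop :=
  forall x i eps, 0 < eps ->
    exists U, topen X U /\ U x /\
      forall y, U y -> sn E i (vsub E (F y) (F x)) < eps.

Definition CX (X : TopSpace) := { f : X -> C | contC X f }.
Definition CXE (X : TopSpace) (E : LCS) := { F : X -> E | contE X E F }.

Definition Ran {X : Type} {E : Type} (F : X -> E) : E -> Prop :=
  fun e => exists x, F x = e.

Lemma contE_tensor (X : TopSpace) (E : LCS) (f : X -> C) (u : E) :
  contC X f -> contE X E (fun x => vscal E (f x) u).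
Proof.
  intros Hf x i eps Heps.
  set (M := sn E i u).
  assert (HM : 0 <= M) by apply sn_nonneg.
  set (d := eps / (M + 1)).
  assert (Hd : 0 < d) by (unfold d; apply Rdiv_lt_0_compat; lra).
  destruct (Hf x d Hd) as [U [HU [Ux HUy]]].
  exists U; split; [exact HU|split; [exact Ux|]].
  intros y Uy.
  assert (Heq : vsub E (vscal E (f y) u) (vscal E (f x) u)
                = vscal E (Csub (f y) (f x)) u).
  { assert (Hc : f y = Cadd (Csub (f y) (f x)) (f x)).
    { unfold Cadd, Csub, Copp; destruct (f y), (f x); simpl; f_equal; ring. }
    unfold vsub. rewrite Hc at 1. rewrite vscal_addl.
    rewrite <- vaddA, vaddN, vaddC, vadd0. reflexivity. }
  rewrite Heq, sn_hom. fold M.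
  specialize (HUy y Uy).
  assert (Hdm : d * (M + 1) = eps) by (unfold d; field; lra).
  pose proof (Cnorm_nonneg (Csub (f y) (f x))).
  nra.
Qed.

Lemma vopp_add (E : CVS) (x y : E) :
  vopp E (vadd E x y) = vadd E (vopp E x) (vopp E y).
Proof.
  assert (H : vadd E (vadd E x y) (vadd E (vopp E x) (vopp E y)) = vzero E).
  { rewrite (vaddC E (vopp E x)).
    rewrite vaddA, <- (vaddA E x y), vaddN, (vaddC E x (vzero E)), vadd0, vaddN.
    reflexivity. }
  set (w := vadd E (vopp E x) (vopp E y)) in *.
  set (s := vadd E x y) in *.
  rewrite <- (vadd0 E (vopp E s)).
  rewrite <- H, (vaddC E s w), <- vaddA, vaddN, vaddC, vadd0. reflexivity.
Qed.

Lemma contE_add (X : TopSpace) (E : LCS) (F G : X -> E) :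
  contE X E F -> contE X E G -> contE X E (fun x => vadd E (F x) (G x)).
Proof.
  intros HF HG x i eps Heps.
  destruct (HF x i (eps/2)) as [U [HU [Ux HUy]]]; [lra|].
  destruct (HG x i (eps/2)) as [V [HV [Vx HVy]]]; [lra|].
  exists (fun z => U z /\ V z); split; [apply topen_inter; assumption|].
  split; [split; assumption|].
  intros y [Uy Vy].
  assert (Heq : vsub E (vadd E (F y) (G y)) (vadd E (F x) (G x))
              = vadd E (vsub E (F y) (F x)) (vsub E (G y) (G x))).
  { unfold vsub. rewrite vopp_add.
    rewrite !vaddA. f_equal.
    rewrite <- !vaddA. f_equal. apply vaddC. }
  rewrite Heq.
  eapply Rle_lt_trans; [apply sn_triangle|].
  specialize (HUy y Uy). specialize (HVy y Vy). lra.
Qed.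

Lemma contC_const1 (X : TopSpace) : contC X (fun _ => C1).
Proof.
  intros x eps Heps. exists (fun _ => True).
  split; [apply topen_full|split; [exact I|]].
  intros y _. unfold Cnorm, Csub, Cadd, Copp, C1; simpl.
  replace ((1 + - (1)) * (1 + - (1)) + (0 + - (0)) * (0 + - (0))) with 0 by ring.
  rewrite sqrt_0. exact Heps.
Qed.

Definition tensor {X : TopSpace} {E : LCS} (f : CX X) (u : E) : CXE X E :=
  exist _ (fun x => vscal E (proj1_sig f x) u)
        (contE_tensor X E (proj1_sig f) u (proj2_sig f)).

Definition cadd {X : TopSpace} {E : LCS} (F G : CXE X E) : CXE X E :=
  exist _ (fun x => vadd E (proj1_sig F x) (proj1_sig G x))
        (contE_add X E _ _ (proj2_sig F) (proj2_sig G)).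

Definition fsub {X : Type} {E : CVS} (F G : X -> E) : X -> E :=
  fun x => vsub E (F x) (G x).

Definition one {X : TopSpace} : CX X := exist _ (fun _ => C1) (contC_const1 X).

(* Main.v *)
Require Import Defs.
From Stdlib Require Import Reals Lra List.
From Stdlib Require Import ProofIrrelevance FunctionalExtensionality Classical ClassicalEpsilon.
Open Scope R_scope.
Import Defs.

Lemma sig_ext {A : Type} {P : A -> Prop} (a b : sig P) :
  proj1_sig a = proj1_sig b -> a = b.
Proof. destruct a as [a pa], b as [b pb]; simpl; intros ->; f_equal; apply proof_irrelevance. Qed.

Lemma C_ext (a b : C) : Re a = Re b -> Im a = Im b -> a = b.
Proof. destruct a, b; simpl; intros -> ->; reflexivity. Qed.

Definition Cinv (z : C) : C :=
  mkC (Re z / (Re z * Re z + Im z * Im z)) (- Im z / (Re z * Re z + Im z * Im z)).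

Lemma Cinv_l z : z <> C0 -> Cmul (Cinv z) z = C1.
Proof.
  intro Hz. destruct z as [r s]. unfold Cinv, Cmul, C1; simpl.
  assert (Hn : r * r + s * s <> 0).
  { intro H0. apply Hz. unfold C0. assert (r = 0) by nra. assert (s = 0) by nra. subst; reflexivity. }
  apply C_ext; simpl; field; exact Hn.
Qed.

Section Vec.
Variable E : CVS.
Lemma vopp0 : vopp E (vzero E) = vzero E.
Proof. rewrite <- (vadd0 E (vopp E (vzero E))). apply vaddN. Qed.
Lemma vadd0r x : vadd E x (vzero E) = x.
Proof. rewrite vaddC; apply vadd0. Qed.
Lemma vsub0 x : vsub E x (vzero E) = x.
Proof. unfold vsub; rewrite vopp0; apply vadd0r. Qed.
Lemma vsub_add x z : vsub E (vadd E x z) z = x.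
Proof. unfold vsub; rewrite <- vaddA, vaddN, vadd0r; reflexivity. Qed.
Lemma vadd_sub x y : vadd E (vsub E x y) y = x.
Proof. unfold vsub; rewrite <- vaddA, (vaddC E (vopp E y) y), vaddN, vadd0r; reflexivity. Qed.
Lemma vsub_eq x y z : vsub E x y = z -> x = vadd E z y.
Proof. intros <-. symmetry. apply vadd_sub. Qed.
Lemma vadd_cancel_r x y z : vadd E x z = vadd E y z -> x = y.
Proof. intro H. rewrite <- (vsub_add x z), H, vsub_add; reflexivity. Qed.
Lemma vscal0 c : vscal E c (vzero E) = vzero E.
Proof.
  apply (vadd_cancel_r _ _ (vscal E c (vzero E))).
  rewrite <- vscal_addr, vadd0, vadd0. reflexivity.
Qed.
Lemma vscal_sub a b w : vsub E (vscal E a w) (vscal E b w) = vscal E (Csub a b) w.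
Proof.
  assert (Ha : vscal E a w = vscal E (Cadd (Csub a b) b) w).
  { f_equal. apply C_ext; unfold Cadd, Csub, Copp; simpl; ring. }
  rewrite Ha, vscal_addl. apply vsub_add.
Qed.
Lemma vscal_inj a b w : w <> vzero E -> vscal E a w = vscal E b w -> a = b.
Proof.
  intros Hw H.
  destruct (classic (Csub a b = C0)) as [H0|H0].
  - pose proof (f_equal Re H0) as H1; pose proof (f_equal Im H0) as H2.
    unfold Csub, Cadd, Copp, C0 in H1, H2; simpl in H1, H2.
    apply C_ext; lra.
  - exfalso. apply Hw.
    assert (Hz : vscal E (Csub a b) w = vzero E).
    { rewrite <- vscal_sub, H. unfold vsub. apply vaddN. }
    rewrite <- (vscal_1 E w), <- (Cinv_l _ H0), vscal_mul, Hz, vscal0. reflexivity.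
Qed.
Lemma indep_b u v a b a' b' : ~ (exists c, v = vscal E c u) ->
  vadd E (vscal E a u) (vscal E b v) = vadd E (vscal E a' u) (vscal E b' v) -> b = b'.
Proof.
  intros Hv H. destruct (classic (Csub b b' = C0)) as [H0|H0].
  - pose proof (f_equal Re H0) as H1; pose proof (f_equal Im H0) as H2.
    unfold Csub, Cadd, Copp, C0 in H1, H2; simpl in H1, H2.
    apply C_ext; lra.
  - exfalso. apply Hv. exists (Cmul (Cinv (Csub b b')) (Csub a' a)).
    assert (E1 : vadd E (vscal E (Csub b b') v) (vadd E (vscal E a u) (vscal E b' v))
                 = vadd E (vscal E a u) (vscal E b v)).
    { rewrite (vaddC E (vscal E a u) (vscal E b' v)), vaddA, <- vscal_addl.
      replace (Cadd (Csub b b') b') with b by (apply C_ext; unfold Cadd, Csub, Copp; simpl; ring).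
      apply vaddC. }
    assert (E2 : vadd E (vscal E (Csub a' a) u) (vadd E (vscal E a u) (vscal E b' v))
                 = vadd E (vscal E a' u) (vscal E b' v)).
    { rewrite vaddA, <- vscal_addl.
      replace (Cadd (Csub a' a) a) with a' by (apply C_ext; unfold Cadd, Csub, Copp; simpl; ring).
      reflexivity. }
    assert (Hk : vscal E (Csub b b') v = vscal E (Csub a' a) u).
    { apply (vadd_cancel_r _ _ _ E1 ) || idtac.
      apply (vadd_cancel_r _ _ (vadd E (vscal E a u) (vscal E b' v))).
      rewrite E1, E2. exact H. }
    rewrite vscal_mul, <- Hk, <- vscal_mul, (Cinv_l _ H0), vscal_1. reflexivity.
Qed.
End Vec.

Lemma Cnorm_le_sum z : Cnorm z <= Rabs (Re z) + Rabs (Im z).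
Proof.
  unfold Cnorm. destruct z as [a b]; simpl.
  pose proof (Rabs_pos a); pose proof (Rabs_pos b).
  rewrite <- (sqrt_square (Rabs a + Rabs b)) by lra.
  apply sqrt_le_1_alt.
  assert (a * a = Rabs a * Rabs a) by (rewrite <- Rabs_mult, Rabs_right; nra).
  assert (b * b = Rabs b * Rabs b) by (rewrite <- Rabs_mult, Rabs_right; nra).
  nra.
Qed.

Lemma Re_le z : Rabs (Re z) <= Cnorm z.
Proof.
  unfold Cnorm. rewrite <- sqrt_Rsqr_abs. apply sqrt_le_1_alt. unfold Rsqr. nra.
Qed.
Lemma Im_le z : Rabs (Im z) <= Cnorm z.
Proof.
  unfold Cnorm. rewrite <- sqrt_Rsqr_abs. apply sqrt_le_1_alt. unfold Rsqr. nra.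
Qed.

Lemma abs4 a1 a2 a3 a4 d1 d2 d3 d4 e :
  Rabs d1 <= e -> Rabs d2 <= e -> Rabs d3 <= e -> Rabs d4 <= e ->
  Rabs (a1*d1+a2*d2+a3*d3+a4*d4) <= (Rabs a1 + Rabs a2 + Rabs a3 + Rabs a4) * e.
Proof.
  intros H1 H2 H3 H4.
  assert (Hm : forall a d, Rabs d <= e -> Rabs (a*d) <= Rabs a * e).
  { intros a d Hd. rewrite Rabs_mult. apply Rmult_le_compat_l; [apply Rabs_pos|exact Hd]. }
  pose proof (Rabs_triang (a1*d1+a2*d2+a3*d3) (a4*d4)).
  pose proof (Rabs_triang (a1*d1+a2*d2) (a3*d3)).
  pose proof (Rabs_triang (a1*d1) (a2*d2)).
  pose proof (Hm a1 d1 H1). pose proof (Hm a2 d2 H2).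
  pose proof (Hm a3 d3 H3). pose proof (Hm a4 d4 H4).
  lra.
Qed.

Definition linf {X : Type} (p q : X -> C) (a1 a2 a3 a4 b1 b2 b3 b4 : R) (x : X) : C :=
  mkC (a1 * Re (p x) + a2 * Im (p x) + a3 * Re (q x) + a4 * Im (q x))
      (b1 * Re (p x) + b2 * Im (p x) + b3 * Re (q x) + b4 * Im (q x)).

Lemma linf_cont (X : TopSpace) (p q : X -> C) a1 a2 a3 a4 b1 b2 b3 b4 :
  contC X p -> contC X q -> contC X (linf p q a1 a2 a3 a4 b1 b2 b3 b4).
Proof.
  intros Hp Hq x eps Heps.
  set (K := Rabs a1 + Rabs a2 + Rabs a3 + Rabs a4 + (Rabs b1 + Rabs b2 + Rabs b3 + Rabs b4)).
  assert (HK : 0 <= K) by (unfold K; pose proof (Rabs_pos a1); pose proof (Rabs_pos a2);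
    pose proof (Rabs_pos a3); pose proof (Rabs_pos a4); pose proof (Rabs_pos b1);
    pose proof (Rabs_pos b2); pose proof (Rabs_pos b3); pose proof (Rabs_pos b4); lra).
  set (d := eps / (K + 1)).
  assert (Hd : 0 < d) by (unfold d; apply Rdiv_lt_0_compat; lra).
  assert (Hdk : d * (K + 1) = eps) by (unfold d; field; lra).
  destruct (Hp x d Hd) as [U [HU [Ux HUy]]].
  destruct (Hq x d Hd) as [V [HV [Vx HVy]]].
  exists (fun z => U z /\ V z). split; [apply topen_inter; assumption|].
  split; [split; assumption|].
  intros y [Uy Vy].
  specialize (HUy y Uy); specialize (HVy y Vy).
  pose proof (Re_le (Csub (p y) (p x))) as R1.
  pose proof (Im_le (Csub (p y) (p x))) as R2.
  pose proof (Re_le (Csub (q y) (q x))) as R3.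
  pose proof (Im_le (Csub (q y) (q x))) as R4.
  change (Re (Csub (p y) (p x))) with (Re (p y) + - Re (p x)) in R1.
  change (Im (Csub (p y) (p x))) with (Im (p y) + - Im (p x)) in R2.
  change (Re (Csub (q y) (q x))) with (Re (q y) + - Re (q x)) in R3.
  change (Im (Csub (q y) (q x))) with (Im (q y) + - Im (q x)) in R4.
  eapply Rle_lt_trans; [apply Cnorm_le_sum|].
  unfold linf, Csub, Cadd, Copp; simpl.
  set (d1 := Re (p y) + - Re (p x)) in *.
  set (d2 := Im (p y) + - Im (p x)) in *.
  set (d3 := Re (q y) + - Re (q x)) in *.
  set (d4 := Im (q y) + - Im (q x)) in *.
  replace (a1 * Re (p y) + a2 * Im (p y) + a3 * Re (q y) + a4 * Im (q y) +
     - (a1 * Re (p x) + a2 * Im (p x) + a3 * Re (q x) + a4 * Im (q x)))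
    with (a1*d1+a2*d2+a3*d3+a4*d4) by (unfold d1, d2, d3, d4; ring).
  replace (b1 * Re (p y) + b2 * Im (p y) + b3 * Re (q y) + b4 * Im (q y) +
     - (b1 * Re (p x) + b2 * Im (p x) + b3 * Re (q x) + b4 * Im (q x)))
    with (b1*d1+b2*d2+b3*d3+b4*d4) by (unfold d1, d2, d3, d4; ring).
  pose proof (abs4 a1 a2 a3 a4 d1 d2 d3 d4 d ltac:(lra) ltac:(lra) ltac:(lra) ltac:(lra)).
  pose proof (abs4 b1 b2 b3 b4 d1 d2 d3 d4 d ltac:(lra) ltac:(lra) ltac:(lra) ltac:(lra)).
  unfold K in Hdk. nra.
Qed.

Definition lin {X : TopSpace} (p q : CX X) a1 a2 a3 a4 b1 b2 b3 b4 : CX X :=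
  exist _ (linf (proj1_sig p) (proj1_sig q) a1 a2 a3 a4 b1 b2 b3 b4)
    (linf_cont X _ _ a1 a2 a3 a4 b1 b2 b3 b4 (proj2_sig p) (proj2_sig q)).

Section Scalar.
Variable X : TopSpace.
Variable S : CX X -> C.
Hypothesis hS : forall F G : CX X, exists x,
  Csub (S F) (S G) = Csub (proj1_sig F x) (proj1_sig G x).
Hypothesis hS0 : forall F : CX X, exists x, S F = proj1_sig F x.
Variables p q : CX X.

Lemma S_ext F G : (forall x, proj1_sig F x = proj1_sig G x) -> S F = S G.
Proof.
  intro H. destruct (hS F G) as [x Hx]. rewrite H in Hx.
  pose proof (f_equal Re Hx) as H1; pose proof (f_equal Im Hx) as H2.
  unfold Csub, Cadd, Copp in H1, H2; simpl in H1, H2.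
  apply C_ext; lra.
Qed.

Notation L := (lin p q).

Lemma step0 a1 a2 a3 a4 : Im (S (L a1 a2 a3 a4 0 0 0 0)) = 0.
Proof.
  destruct (hS0 (L a1 a2 a3 a4 0 0 0 0)) as [x Hx]. rewrite Hx. simpl. ring.
Qed.

Lemma step1 a1 a2 a3 a4 :
  Re (S (L 0 0 0 0 a1 a2 a3 a4)) = 0 /\
  Im (S (L 0 0 0 0 a1 a2 a3 a4)) = Re (S (L a1 a2 a3 a4 0 0 0 0)).
Proof.
  pose proof (step0 a1 a2 a3 a4) as H0.
  destruct (hS0 (L 0 0 0 0 a1 a2 a3 a4)) as [x1 Hx1].
  destruct (hS (L 0 0 0 0 a1 a2 a3 a4) (L a1 a2 a3 a4 0 0 0 0)) as [x2 Hx2].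
  pose proof (f_equal Re Hx1) as H1. pose proof (f_equal Re Hx2) as H2.
  pose proof (f_equal Im Hx2) as H3.
  unfold Csub, Cadd, Copp in H2, H3; simpl in H1, H2, H3.
  split; lra.
Qed.

Lemma step2 a1 a2 a3 a4 b1 b2 b3 b4 :
  Re (S (L a1 a2 a3 a4 b1 b2 b3 b4)) = Re (S (L a1 a2 a3 a4 0 0 0 0)) /\
  Im (S (L a1 a2 a3 a4 b1 b2 b3 b4)) = Re (S (L b1 b2 b3 b4 0 0 0 0)).
Proof.
  pose proof (step0 a1 a2 a3 a4) as H0.
  pose proof (step1 b1 b2 b3 b4) as [H4 H5].
  destruct (hS (L a1 a2 a3 a4 b1 b2 b3 b4) (L a1 a2 a3 a4 0 0 0 0)) as [x1 Hx1].
  destruct (hS (L a1 a2 a3 a4 b1 b2 b3 b4) (L 0 0 0 0 b1 b2 b3 b4)) as [x2 Hx2].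
  pose proof (f_equal Re Hx1) as H1. pose proof (f_equal Im Hx2) as H2.
  unfold Csub, Cadd, Copp in H1, H2; simpl in H1, H2.
  split; lra.
Qed.

Lemma step3 a1 a2 a3 a4 c1 c2 c3 c4 :
  Re (S (L (a1 + c1) (a2 + c2) (a3 + c3) (a4 + c4) 0 0 0 0)) =
  Re (S (L a1 a2 a3 a4 0 0 0 0)) + Re (S (L c1 c2 c3 c4 0 0 0 0)).
Proof.
  pose proof (step0 a1 a2 a3 a4) as H0.
  pose proof (step2 (a1 + c1) (a2 + c2) (a3 + c3) (a4 + c4) c1 c2 c3 c4) as [H4 H5].
  destruct (hS (L (a1 + c1) (a2 + c2) (a3 + c3) (a4 + c4) c1 c2 c3 c4)
               (L a1 a2 a3 a4 0 0 0 0)) as [x Hx].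
  pose proof (f_equal Re Hx) as H1. pose proof (f_equal Im Hx) as H2.
  unfold Csub, Cadd, Copp in H1, H2; simpl in H1, H2.
  lra.
Qed.

Lemma scalar_add : S (L 1 0 1 0 0 1 0 1) = Cadd (S p) (S q).
Proof.
  rewrite (S_ext p (L 1 0 0 0 0 1 0 0)) by
    (intro x; unfold lin, linf; simpl; apply C_ext; simpl; ring).
  rewrite (S_ext q (L 0 0 1 0 0 0 0 1)) by
    (intro x; unfold lin, linf; simpl; apply C_ext; simpl; ring).
  destruct (step2 1 0 1 0 0 1 0 1) as [A1 A2].
  destruct (step2 1 0 0 0 0 1 0 0) as [B1 B2].
  destruct (step2 0 0 1 0 0 0 0 1) as [C1' C2'].
  pose proof (step3 1 0 0 0 0 0 1 0) as D1.
  pose proof (step3 0 1 0 0 0 0 0 1) as D2.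
  rewrite (S_ext (L (1 + 0) (0 + 0) (0 + 1) (0 + 0) 0 0 0 0) (L 1 0 1 0 0 0 0 0)) in D1 by
    (intro x; unfold lin, linf; simpl; apply C_ext; simpl; ring).
  rewrite (S_ext (L (0 + 0) (1 + 0) (0 + 0) (0 + 1) 0 0 0 0) (L 0 1 0 1 0 0 0 0)) in D2 by
    (intro x; unfold lin, linf; simpl; apply C_ext; simpl; ring).
  apply C_ext; unfold Cadd; simpl; lra.
Qed.
End Scalar.

Definition RanDec (X Y : TopSpace) (E : LCS) (T : CXE X E -> CXE Y E) : Prop :=
  forall F G : CXE X E,
      forall e, Ran (fsub (proj1_sig (T F)) (proj1_sig (T G))) e ->
                Ran (fsub (proj1_sig F) (proj1_sig G)) e.

Lemma hR' X Y E T (hRan : RanDec X Y E T) (F G : CXE X E) (y : Y) :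
  exists x, vsub E (proj1_sig (T F) y) (proj1_sig (T G) y)
          = vsub E (proj1_sig F x) (proj1_sig G x).
Proof.
  destruct (hRan F G _ (ex_intro _ y eq_refl)) as [x Hx].
  exists x. unfold fsub in Hx. symmetry. exact Hx.
Qed.

Lemma T_val X Y E T (hRan : RanDec X Y E T)
  (hT0 : T (tensor one (vzero E)) = tensor one (vzero E)) (F : CXE X E) (y : Y) :
  exists x, proj1_sig (T F) y = proj1_sig F x.
Proof.
  destruct (hR' X Y E T hRan F (tensor one (vzero E)) y) as [x Hx].
  exists x. rewrite hT0 in Hx. simpl in Hx. rewrite !vscal0, !vsub0 in Hx. exact Hx.
Qed.

Section TS.
Variables (X Y : TopSpace) (E : LCS) (T : CXE X E -> CXE Y E).
Hypothesis hRan : RanDec X Y E T.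
Hypothesis hT0 : T (tensor one (vzero E)) = tensor one (vzero E).

Lemma exS (y : Y) (w : E) (p : CX X) :
  exists c, proj1_sig (T (tensor p w)) y = vscal E c w.
Proof. destruct (T_val X Y E T hRan hT0 (tensor p w) y) as [x Hx]. exists (proj1_sig p x). exact Hx. Qed.

Definition Sw y w p : C := proj1_sig (constructive_indefinite_description _ (exS y w p)).

Lemma Sw_spec y w p : proj1_sig (T (tensor p w)) y = vscal E (Sw y w p) w.
Proof. unfold Sw. destruct (constructive_indefinite_description _ _) as [c Hc]. exact Hc. Qed.

Lemma Sw_hS y w : w <> vzero E -> forall F G : CX X, exists x,
  Csub (Sw y w F) (Sw y w G) = Csub (proj1_sig F x) (proj1_sig G x).
Proof.
  intros Hw F G. destruct (hR' X Y E T hRan (tensor F w) (tensor G w) y) as [x Hx].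
  exists x. rewrite !Sw_spec in Hx. simpl in Hx. rewrite !vscal_sub in Hx.
  exact (vscal_inj _ _ _ _ Hw Hx).
Qed.

Lemma Sw_hS0 y w : w <> vzero E -> forall F : CX X, exists x, Sw y w F = proj1_sig F x.
Proof.
  intros Hw F. destruct (T_val X Y E T hRan hT0 (tensor F w) y) as [x Hx].
  exists x. rewrite Sw_spec in Hx. simpl in Hx. exact (vscal_inj _ _ _ _ Hw Hx).
Qed.

Lemma dep_case (f g : CX X) (u : E) (c : C) : u <> vzero E ->
  T (cadd (tensor f u) (tensor g (vscal E c u))) =
  cadd (T (tensor f u)) (T (tensor g (vscal E c u))).
Proof.
  intro Hu.
  set (cg := lin g g (Re c) (- Im c) 0 0 (Im c) (Re c) 0 0).
  assert (Ha : cadd (tensor f u) (tensor g (vscal E c u)) = tensor (lin f cg 1 0 1 0 0 1 0 1) u).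
  { apply sig_ext; simpl; apply functional_extensionality; intro x.
    rewrite <- vscal_mul, <- vscal_addl. f_equal.
    unfold cg, lin, linf; simpl. apply C_ext; unfold Cadd, Cmul; simpl; ring. }
  assert (Hb : tensor g (vscal E c u) = tensor cg u).
  { apply sig_ext; simpl; apply functional_extensionality; intro x.
    rewrite <- vscal_mul. f_equal.
    unfold cg, lin, linf; simpl. apply C_ext; unfold Cmul; simpl; ring. }
  rewrite Ha, Hb. apply sig_ext; simpl; apply functional_extensionality; intro y.
  rewrite !Sw_spec.
  rewrite (scalar_add X (Sw y u) (Sw_hS y u Hu) (Sw_hS0 y u Hu) f cg).
  apply vscal_addl.
Qed.

Lemma indep_case (f g : CX X) (u v : E) : ~ (exists c, v = vscal E c u) ->
  T (cadd (tensor f u) (tensor g v)) = cadd (T (tensor f u)) (T (tensor g v)).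
Proof.
  intro Hnd. apply sig_ext; simpl; apply functional_extensionality; intro y.
  set (H := cadd (tensor f u) (tensor g v)).
  destruct (hR' X Y E T hRan H (tensor f u) y) as [x1 H1].
  destruct (hR' X Y E T hRan H (tensor g v) y) as [x2 H2].
  destruct (T_val X Y E T hRan hT0 (tensor f u) y) as [x3 H3].
  destruct (T_val X Y E T hRan hT0 (tensor g v) y) as [x4 H4].
  unfold H in H1, H2; simpl in H1, H2, H3, H4.
  rewrite (vaddC E (vscal E (proj1_sig f x1) u)), vsub_add in H1.
  rewrite vsub_add in H2.
  apply vsub_eq in H1. apply vsub_eq in H2.
  fold H in H1, H2.
  rewrite H3 in H1. rewrite H4 in H2.
  assert (Hg : proj1_sig g x1 = proj1_sig g x4).
  { apply (indep_b E u v (proj1_sig f x3) _ (proj1_sig f x2) _ Hnd).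
    rewrite (vaddC E (vscal E (proj1_sig f x3) u)), <- H1. exact H2. }
  rewrite H1, H3, H4, Hg. apply vaddC.
Qed.
End TS.

Theorem lemma4p4 (X Y : TopSpace) (E : LCS)
  (hX : top_compact X) (hXH : top_hausdorff X) (hXne : inhabited X)
  (hY : top_compact Y) (hYH : top_hausdorff Y) (hYne : inhabited Y)
  (hE : exists e : E, e <> vzero E)
  (T : CXE X E -> CXE Y E)
  (hRan : forall F G : CXE X E,
      forall e, Ran (fsub (proj1_sig (T F)) (proj1_sig (T G))) e ->
                Ran (fsub (proj1_sig F) (proj1_sig G)) e)
  (hT0 : T (tensor one (vzero E)) = tensor one (vzero E)) :
  forall (f g : CX X) (u v : E),
    T (cadd (tensor f u) (tensor g v)) = cadd (T (tensor f u)) (T (tensor g v)).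
Proof.
  intros f g u v.
  destruct (classic (u = vzero E)) as [Hu0|Hu].
  - subst u.
    assert (Hz : tensor f (vzero E) = tensor (E:=E) (X:=X) one (vzero E)).
    { apply sig_ext; simpl; apply functional_extensionality; intro x; rewrite !vscal0; reflexivity. }
    rewrite Hz, hT0.
    assert (Hc : forall (Z : TopSpace) (F : CXE Z E), cadd (tensor one (vzero E)) F = F).
    { intros Z F; apply sig_ext; simpl; apply functional_extensionality; intro x.
      rewrite vscal0, vadd0; reflexivity. }
    rewrite (Hc X (tensor g v)), (Hc Y (T (tensor g v))). reflexivity.
  - destruct (classic (exists c, v = vscal E c u)) as [[c Hc]|Hnd].
    + subst v. exact (dep_case X Y E T hRan hT0 f g u c Hu).
    + exact (indep_case X Y E T hRan hT0 f g u v Hnd).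
Qed.
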